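(* Fix $N\ge1$. Partition the days $\{0,1,\dots,N-1\}$ into break days (on which the dose is forced to be $0$), fixed days (on which the dose is forced to equal a prescribed value $\bar d_k\ge0$), and free days, with at least one free day, and with the prescribed fixed doses satisfying $\sum_{k\text{ fixed}}\mathrm{BED}_O(\bar d_k)\le c$. Consider minimizing $Y_{N-1}^+$ over the free doses $d_k\ge0$ subject to $\sum_{k=0}^{N-1}\mathrm{BED}_O(d_k)\le c$ (with the forced values on break and fixed days). Assume $\phi(x)>0$ for all $x>0$ and $\phi$ is non-increasing in $x$. If $[\alpha/\beta]_O\ge\gamma[\alpha/\beta]_T$, then an optimal solution is to deliver a single nonzero dose on the last free day (all other free days receiving dose $0$). If $[\alpha/\beta]_O<\gamma[\alpha/\beta]_T$, then an optimal sequence of doses, restricted to the free days, is non-decreasing over the course of treatment.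
   Context: Model: Tumor parameters $\alpha_T>0$, $\beta_T>0$, $[\alpha/\beta]_T=\alpha_T/\beta_T$; organ-at-risk (OAR) parameter $[\alpha/\beta]_O>0$; sparing factor $0<\gamma<1$; OAR limit $c>0$. Define $\mathrm{BED}_T(d)=d\left(1+\frac{d}{[\alpha/\beta]_T}\right)$ and $\mathrm{BED}_O(d)=\gamma d\left(1+\frac{\gamma d}{[\alpha/\beta]_O}\right)$. Tumor growth between doses follows $\frac{1}{x}\frac{dx}{dt}=\phi(x)$, with $\phi:(0,\infty)\to\mathbb{R}$ continuous and non-increasing. Doses $d_0,\dots,d_{N-1}$ are delivered at times $0,1,\dots,N-1$. With $Y=\ln(\text{number of tumor cells})/\alpha_T$, let $F$ be the one-day growth map for $Y$ under the ODE. With initial cell number $X_0>0$ and $Y_0^-=\ln(X_0)/\alpha_T$: $Y_0^+=Y_0^--\mathrm{BED}_T(d_0)$, $Y_{i+1}^+=F(Y_i^+)-\mathrm{BED}_T(d_{i+1})$ for $i=0,\dots,N-2$. *)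

(* Defs.v *)
From Stdlib Require Import Reals.
From Coquelicot Require Import Coquelicot.
Open Scope R_scope.

Definition BED_T (abT d : R) : R := d * (1 + d / abT).

Definition BED_O (abO gam d : R) : R := gam * d * (1 + gam * d / abO).

Inductive day_kind : Type := BreakDay | FixedDay | FreeDay.

Fixpoint sumN (f : nat -> R) (N : nat) : R :=
  match N with
  | O => 0
  | S n => sumN f n + f n
  end.

(* F is the one-day growth map for Y = ln(#cells)/alpha_T under
   (1/x) dx/dt = phi(x): F y = ln(x(1))/alpha_T where x solves
   x' = x phi(x) on [0,1] with x(0) = exp(alpha_T y). *)
Definition one_day_growth_map (alphaT : R) (phi : R -> R) (F : R -> R) : Prop :=
  forall y : R, exists x : R -> R,
    x 0 = exp (alphaT * y) /\
    (forall t, 0 <= t <= 1 -> 0 < x t /\ is_derive x t (x t * phi (x t))) /\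
    F y = ln (x 1) / alphaT.

Fixpoint Yplus (F : R -> R) (abT Y0m : R) (d : nat -> R) (n : nat) : R :=
  match n with
  | O => Y0m - BED_T abT (d O)
  | S i => F (Yplus F abT Y0m d i) - BED_T abT (d (S i))
  end.

Definition feasible (N : nat) (kind : nat -> day_kind) (dbar : nat -> R)
    (abO gam c : R) (d : nat -> R) : Prop :=
  (forall k, (k < N)%nat -> 0 <= d k) /\
  (forall k, (k < N)%nat -> kind k = BreakDay -> d k = 0) /\
  (forall k, (k < N)%nat -> kind k = FixedDay -> d k = dbar k) /\
  sumN (fun k => BED_O abO gam (d k)) N <= c.

Definition optimal (N : nat) (kind : nat -> day_kind) (dbar : nat -> R)
    (abO gam c : R) (F : R -> R) (abT Y0m : R) (d : nat -> R) : Prop :=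
  feasible N kind dbar abO gam c d /\
  forall d', feasible N kind dbar abO gam c d' ->
    Yplus F abT Y0m d (N - 1) <= Yplus F abT Y0m d' (N - 1).

Definition fixed_BED_sum (N : nat) (kind : nat -> day_kind) (dbar : nat -> R)
    (abO gam : R) : R :=
  sumN (fun k => match kind k with FixedDay => BED_O abO gam (dbar k) | _ => 0 end) N.

(* Main.v *)
Require Import Defs.
From Stdlib Require Import Reals Lra Psatz Lia.
From Coquelicot Require Import Coquelicot.
Open Scope R_scope.

Lemma div_nonneg a b : 0 <= a -> 0 < b -> 0 <= a / b.
Proof. intros. unfold Rdiv. apply Rmult_le_pos; [lra| apply Rlt_le, Rinv_0_lt_compat; lra]. Qed.

Lemma sumN_ext f g n : (forall k, (k < n)%nat -> f k = g k) -> sumN f n = sumN g n.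
Proof. induction n; simpl; intros H; auto. rewrite IHn by (intros; apply H; lia). rewrite (H n) by lia. ring. Qed.

Lemma sumN_plus f g n : sumN (fun k => f k + g k) n = sumN f n + sumN g n.
Proof. induction n; simpl; [ring| rewrite IHn; ring]. Qed.

Lemma sumN_scal a f n : sumN (fun k => a * f k) n = a * sumN f n.
Proof. induction n; simpl; [ring| rewrite IHn; ring]. Qed.

Lemma sumN_minus f g n : sumN (fun k => f k - g k) n = sumN f n - sumN g n.
Proof. induction n; simpl; [ring| rewrite IHn; ring]. Qed.

Lemma sumN_nonneg f n : (forall k, (k < n)%nat -> 0 <= f k) -> 0 <= sumN f n.
Proof. intros H; induction n; simpl; [lra|].
  assert (0 <= sumN f n) by (apply IHn; intros; apply H; lia). specialize (H n ltac:(lia)); lra. Qed.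

Lemma sumN_mono_n f n m : (forall k, (k < m)%nat -> 0 <= f k) -> (n <= m)%nat -> sumN f n <= sumN f m.
Proof. intros H Hnm; induction Hnm; simpl; [lra|].
  assert (sumN f n <= sumN f m) by (apply IHHnm; intros; apply H; lia). specialize (H m ltac:(lia)); lra. Qed.

Lemma sumN_le_term f n k : (forall k, (k < n)%nat -> 0 <= f k) -> (k < n)%nat -> f k <= sumN f n.
Proof.
  intros H Hk. apply Rle_trans with (sumN f (S k)).
  - simpl. assert (0 <= sumN f k) by (apply sumN_nonneg; intros; apply H; lia). lra.
  - apply sumN_mono_n; auto.
Qed.

Lemma sumN_zero f n : (forall k, (k < n)%nat -> f k = 0) -> sumN f n = 0.
Proof. induction n; simpl; intros H; auto. rewrite IHn by (intros; apply H; lia). rewrite H by lia. ring. Qed.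

Lemma sumN_one h n j : (forall k, k <> j -> h k = 0) ->
  sumN h n = if Nat.ltb j n then h j else 0.
Proof.
  intros H. induction n; simpl; auto.
  rewrite IHn. destruct (Nat.eq_dec n j) as [->|Hn].
  - rewrite (proj2 (Nat.ltb_ge j j)) by lia. rewrite (proj2 (Nat.ltb_lt j (S j))) by lia. ring.
  - rewrite (H n Hn). destruct (Nat.ltb j n) eqn:E; destruct (Nat.ltb j (S n)) eqn:E2;
    try ring; apply Nat.ltb_lt in E || apply Nat.ltb_ge in E;
    apply Nat.ltb_lt in E2 || apply Nat.ltb_ge in E2; lia.
Qed.

Lemma sumN_two h n i j : i <> j -> (i < n)%nat -> (j < n)%nat ->
  (forall k, k <> i -> k <> j -> h k = 0) -> sumN h n = h i + h j.
Proof.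
  intros Hij Hi Hj H.
  rewrite (sumN_ext h (fun k => (if Nat.eq_dec k i then h i else 0) + (if Nat.eq_dec k j then h j else 0))).
  - rewrite sumN_plus.
    rewrite (sumN_one _ n i), (sumN_one _ n j).
    + rewrite (proj2 (Nat.ltb_lt i n)), (proj2 (Nat.ltb_lt j n)) by lia.
      destruct (Nat.eq_dec i i); destruct (Nat.eq_dec j j); try contradiction; auto.
    + intros k Hk; simpl; destruct (Nat.eq_dec k j); [contradiction|auto].
    + intros k Hk; simpl; destruct (Nat.eq_dec k i); [contradiction|auto].
  - intros k _. destruct (Nat.eq_dec k i); destruct (Nat.eq_dec k j); subst; try lia.
    + ring.
    + ring.
    + rewrite H by auto; ring.
Qed.

Lemma sumN_sq f n : (forall k, (k < n)%nat -> 0 <= f k) -> sumN (fun k => f k * f k) n <= sumN f n * sumN f n.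
Proof.
  intros H; induction n; simpl; [lra|].
  assert (0 <= sumN f n) by (apply sumN_nonneg; intros; apply H; lia).
  assert (sumN (fun k => f k * f k) n <= sumN f n * sumN f n) by (apply IHn; intros; apply H; lia).
  specialize (H n ltac:(lia)). nra.
Qed.

Lemma domination (F : R -> R) abT Y0m (a b s : nat -> R) M :
  (forall y1 y2, y1 <= y2 -> F y1 <= F y2 /\ F y2 - F y1 <= y2 - y1) ->
  (forall n, 0 <= s n) ->
  s 0%nat >= BED_T abT (b 0%nat) - BED_T abT (a 0%nat) ->
  (forall n, (S n <= M)%nat -> s (S n) >= s n + BED_T abT (b (S n)) - BED_T abT (a (S n))) ->
  forall n, (n <= M)%nat -> Yplus F abT Y0m a n <= Yplus F abT Y0m b n + s n.
Proof.
  intros HF Hs H0 HS n. induction n; intros Hn; simpl.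
  - lra.
  - specialize (IHn ltac:(lia)). specialize (HS n Hn).
    destruct (HF _ _ IHn) as [m1 _].
    pose proof (Hs n) as sn.
    destruct (HF (Yplus F abT Y0m b n) (Yplus F abT Y0m b n + s n) ltac:(lra)) as [_ m2].
    lra.
Qed.

Lemma Yplus_ext F abT Y0m d d' n : (forall k, (k <= n)%nat -> d k = d' k) ->
  Yplus F abT Y0m d n = Yplus F abT Y0m d' n.
Proof.
  induction n; intros H; simpl.
  - rewrite H by lia; auto.
  - rewrite IHn by (intros; apply H; lia). rewrite (H (S n)) by lia. auto.
Qed.

Lemma BED_T_mono abT x y : 0 < abT -> 0 <= x <= y -> BED_T abT x <= BED_T abT y.
Proof.
  intros Ha Hxy. unfold BED_T.
  assert (x / abT <= y / abT) by (unfold Rdiv; apply Rmult_le_compat_r; [apply Rlt_le, Rinv_0_lt_compat; lra | lra]).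
  assert (0 <= x / abT) by (apply div_nonneg; lra). nra.
Qed.

Lemma BED_T_0 abT : BED_T abT 0 = 0.
Proof. unfold BED_T; ring. Qed.
Lemma BED_O_0 abO gam : BED_O abO gam 0 = 0.
Proof. unfold BED_O; ring. Qed.

Lemma BED_O_nonneg abO gam x : 0 < abO -> 0 < gam -> 0 <= x -> 0 <= BED_O abO gam x.
Proof. intros. unfold BED_O. assert (0 <= gam * x / abO) by (apply div_nonneg; nra).
  apply Rmult_le_pos; nra. Qed.

Lemma BED_O_ge abO gam x : 0 < abO -> 0 < gam -> 0 <= x -> gam * x <= BED_O abO gam x.
Proof. intros. unfold BED_O. assert (0 <= gam * x / abO) by (apply div_nonneg; nra).
  assert (0 <= gam * x) by nra. set (u := gam * x / abO) in *. set (v := gam * x) in *. nra. Qed.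


Lemma deriv_lnx (x : R -> R) (p : R -> R) t :
  0 < x t -> is_derive x t (x t * p (x t)) ->
  is_derive (fun s => ln (x s)) t (p (x t)).
Proof.
  intros Hp Hd.
  pose proof (is_derive_comp ln x t _ _ (is_derive_ln _ Hp) Hd) as H.
  eapply is_derive_ext; [ intros; reflexivity | ].
  replace (p (x t)) with (scal (x t * p (x t)) (/ x t)). exact H.
  unfold scal; simpl; unfold mult; simpl. field. lra.
Qed.

Lemma deriv_sq (D dD : R -> R) t :
  is_derive D t (dD t) -> is_derive (fun s => D s * D s) t (2 * D t * dD t).
Proof.
  intros H.
  pose proof (is_derive_mult D D t _ _ H H) as H2.
  replace (2 * D t * dD t) with (plus (mult (dD t) (D t)) (mult (D t) (dD t))).
  apply H2. intros; apply Rmult_comm.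
  unfold plus, mult; simpl. ring.
Qed.

Lemma cont_of_derive (f : R -> R) t l : is_derive f t l -> continuity_pt f t.
Proof.
  intros H. apply continuity_pt_filterlim. apply (@ex_derive_continuous R_AbsRing R_NormedModule). exists l; exact H.
Qed.

Lemma sq_noninc (D dD : R -> R) :
  (forall t, 0 <= t <= 1 -> is_derive D t (dD t)) ->
  (forall t, 0 <= t <= 1 -> D t * dD t <= 0) ->
  forall a b, 0 <= a <= b -> b <= 1 -> D b * D b <= D a * D a.
Proof.
  intros Hd Hs a b Hab Hb.
  pose proof (MVT_gen (fun s => D s * D s) a b (fun s => 2 * D s * dD s)) as M.
  simpl in M. rewrite Rmin_left, Rmax_right in M by lra.
  destruct M as [c [Hc E]].
  - intros x Hx. apply deriv_sq. apply Hd. lra.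
  - intros x Hx. apply (cont_of_derive _ _ (2 * D x * dD x)). apply deriv_sq, Hd. lra.
  - assert (D c * dD c <= 0) by (apply Hs; lra). nra.
Qed.

Lemma F_props (alphaT : R) (phi F : R -> R) :
  0 < alphaT ->
  (forall x y, 0 < x -> x <= y -> phi y <= phi x) ->
  (forall y : R, exists x : R -> R,
    x 0 = exp (alphaT * y) /\
    (forall t, 0 <= t <= 1 -> 0 < x t /\ is_derive x t (x t * phi (x t))) /\
    F y = ln (x 1) / alphaT) ->
  forall y1 y2, y1 <= y2 -> F y1 <= F y2 /\ F y2 - F y1 <= y2 - y1.
Proof.
  intros Ha Hphi HF y1 y2 Hy.
  destruct (HF y1) as [x1 [H10 [H1d H1F]]].
  destruct (HF y2) as [x2 [H20 [H2d H2F]]].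
  set (D := fun t => ln (x2 t) - ln (x1 t)).
  set (dD := fun t => phi (x2 t) - phi (x1 t)).
  assert (Hd : forall t, 0 <= t <= 1 -> is_derive D t (dD t)).
  { intros t Ht. destruct (H1d t Ht) as [p1 d1]. destruct (H2d t Ht) as [p2 d2].
    unfold D, dD.
    apply (is_derive_minus (fun s => ln (x2 s)) (fun s => ln (x1 s)));
      apply deriv_lnx; assumption. }
  assert (Hs : forall t, 0 <= t <= 1 -> D t * dD t <= 0).
  { intros t Ht. destruct (H1d t Ht) as [p1 d1]. destruct (H2d t Ht) as [p2 d2].
    unfold D, dD.
    destruct (Rtotal_order (ln (x2 t)) (ln (x1 t))) as [L|[L|L]].
    - pose proof L as L'. apply ln_lt_inv in L; auto. assert (phi (x1 t) <= phi (x2 t)) by (apply Hphi; lra). nra.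
    - rewrite L. lra.
    - pose proof L as L'. apply ln_lt_inv in L; auto. assert (phi (x2 t) <= phi (x1 t)) by (apply Hphi; lra). nra. }
  assert (HD0 : D 0 = alphaT * (y2 - y1)).
  { unfold D. rewrite H10, H20, !ln_exp. ring. }
  assert (HD1 : F y2 - F y1 = D 1 / alphaT).
  { rewrite H1F, H2F. unfold D. field. lra. }
  assert (G01 : D 1 * D 1 <= D 0 * D 0) by (apply (sq_noninc D dD); auto; lra).
  assert (D0p : 0 <= D 0) by (rewrite HD0; nra).
  assert (D1p : 0 <= D 1).
  { destruct (Rle_or_lt 0 (D 1)) as [h|h]; [exact h|exfalso].
    destruct (Req_dec (D 0) 0) as [z|z].
    - nra.
    - assert (0 < D 0) by (destruct D0p; [assumption| congruence]).
      destruct (Ranalysis5.IVT_interv (fun t => - D t) 0 1) as [t0 [Ht0 E0]].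
      + intros a Ha'. apply (cont_of_derive _ _ (opp (dD a))).
        apply (is_derive_opp D). apply Hd; lra.
      + lra.
      + lra.
      + lra.
      + assert (D 1 * D 1 <= D t0 * D t0) by (apply (sq_noninc D dD); auto; lra).
        assert (D t0 = 0) by lra. nra. }
  assert (D 1 <= D 0) by nra.
  split.
  - assert (0 <= F y2 - F y1); [rewrite HD1; apply Rdiv_le_0_compat; lra | lra].
  - rewrite HD1. apply Rmult_le_reg_r with alphaT; auto.
    unfold Rdiv. rewrite Rmult_assoc, Rinv_l by lra. nra.
Qed.


Definition invO abO gam u := (- abO + sqrt (abO * abO + 4 * abO * u)) / (2 * gam).

Lemma invO_spec abO gam u : 0 < abO -> 0 < gam -> 0 <= u ->
  0 <= invO abO gam u /\ BED_O abO gam (invO abO gam u) = u /\ (0 < u -> 0 < invO abO gam u).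
Proof.
  intros Ha Hg Hu. unfold invO.
  set (S := sqrt (abO * abO + 4 * abO * u)).
  assert (HS2 : S * S = abO * abO + 4 * abO * u) by (apply sqrt_sqrt; nra).
  assert (HS0 : 0 <= S) by apply sqrt_pos.
  assert (HSa : abO <= S) by nra.
  split; [|split].
  - apply div_nonneg; lra.
  - unfold BED_O. field_simplify; [| lra ].
    replace (S ^ 2) with (S * S) by ring. rewrite HS2. field. lra.
  - intros Hu'. assert (abO < S) by nra. unfold Rdiv. apply Rmult_lt_0_compat; [lra| apply Rinv_0_lt_compat; lra].
Qed.

Lemma key_ineq a g t X Q z : 0 < a -> 0 < g -> 0 < t -> a >= g * t -> 0 <= X -> 0 <= Q -> Q <= X * X ->
  0 <= z -> g * X + g * g * Q / a <= BED_O a g z -> X + Q / t <= BED_T t z.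
Proof.
  intros Ha Hg Ht Hat HX HQ HQX Hz H. unfold BED_O, BED_T in *.
  set (q := / a) in *. set (p := / t) in *.
  assert (q > 0) by (apply Rinv_0_lt_compat; lra).
  assert (p > 0) by (apply Rinv_0_lt_compat; lra).
  assert (Haq : a * q = 1) by (unfold q; field; lra).
  assert (Htp : t * p = 1) by (unfold p; field; lra).
  assert (gqp : g * q <= p).
  { assert (g * q * t <= a * q) by nra. nra. }
  unfold Rdiv in *. fold q in H. fold p.
  assert (H' : g * X + g * g * Q * q <= g * z + g * g * z * z * q) by nra.
  assert (Qz : Q <= z * z).
  { destruct (Rle_or_lt Q (z * z)) as [h|h]; [exact h|exfalso].
    assert (z < X) by nra.
    assert (g * z < g * X) by nra.
    assert (g * g * z * z * q <= g * g * Q * q) by (apply Rmult_le_compat_r; nra).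
    lra. }
  assert (g * (X + Q * p) <= g * (z + z * z * p)).
  { assert (g * Q * (p - g * q) <= g * z * z * (p - g * q)) by (apply Rmult_le_compat_r; nra).
    nra. }
  nra.
Qed.

Definition fr (kind : nat -> day_kind) k v := match kind k with FreeDay => v | _ => 0 end.

Definition dstar (kind : nat -> day_kind) dbar l z k :=
  match kind k with FreeDay => if Nat.eqb k l then z else 0 | FixedDay => dbar k | BreakDay => 0 end.

Lemma O_split N kind dbar abO gam (d : nat -> R) :
  (forall k, (k < N)%nat -> kind k = BreakDay -> d k = 0) ->
  (forall k, (k < N)%nat -> kind k = FixedDay -> d k = dbar k) ->
  sumN (fun k => BED_O abO gam (d k)) N =
  sumN (fun k => fr kind k (BED_O abO gam (d k))) N + fixed_BED_sum N kind dbar abO gam.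
Proof.
  intros HB HFx. unfold fixed_BED_sum. rewrite <- sumN_plus. apply sumN_ext.
  intros k Hk. unfold fr. destruct (kind k) eqn:E.
  - rewrite (HB k Hk E), BED_O_0. ring.
  - rewrite (HFx k Hk E). ring.
  - ring.
Qed.

Lemma fr_BED_T kind k t v : fr kind k (BED_T t v) = fr kind k v + / t * (fr kind k v * fr kind k v).
Proof. unfold fr, BED_T. destruct (kind k); unfold Rdiv; ring. Qed.

Lemma fr_BED_O kind k a g v : fr kind k (BED_O a g v) = g * fr kind k v + g * g / a * (fr kind k v * fr kind k v).
Proof. unfold fr, BED_O. destruct (kind k); unfold Rdiv; ring. Qed.

Lemma free_T_bound N kind dbar abO gam c abT (d : nat -> R) z :
  0 < abO -> 0 < gam -> 0 < abT -> abO >= gam * abT -> 0 <= z ->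
  feasible N kind dbar abO gam c d ->
  c - fixed_BED_sum N kind dbar abO gam <= BED_O abO gam z ->
  sumN (fun k => fr kind k (BED_T abT (d k))) N <= BED_T abT z.
Proof.
  intros Ha Hg Ht Hat Hz [Hn [HB [HFx Hs]]] Hc.
  rewrite (O_split N kind dbar abO gam d HB HFx) in Hs.
  set (X := sumN (fun k => fr kind k (d k)) N).
  set (Q := sumN (fun k => fr kind k (d k) * fr kind k (d k)) N).
  assert (frn : forall k, (k < N)%nat -> 0 <= fr kind k (d k)).
  { intros k Hk. unfold fr. destruct (kind k); try lra; apply Hn; auto. }
  assert (E1 : sumN (fun k => fr kind k (BED_T abT (d k))) N = X + Q / abT).
  { rewrite (sumN_ext _ (fun k => fr kind k (d k) + / abT * (fr kind k (d k) * fr kind k (d k))))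
      by (intros; apply fr_BED_T).
    rewrite sumN_plus, sumN_scal. unfold X, Q, Rdiv. ring. }
  assert (E2 : sumN (fun k => fr kind k (BED_O abO gam (d k))) N = gam * X + gam * gam * Q / abO).
  { rewrite (sumN_ext _ (fun k => gam * fr kind k (d k) + gam * gam / abO * (fr kind k (d k) * fr kind k (d k))))
      by (intros; apply fr_BED_O).
    rewrite sumN_plus, !sumN_scal. unfold X, Q, Rdiv. ring. }
  rewrite E1. apply key_ineq with abO gam; auto.
  - apply sumN_nonneg; auto.
  - apply sumN_nonneg. intros k Hk. specialize (frn k Hk). nra.
  - apply sumN_sq; auto.
  - lra.
Qed.

Lemma case1 (F : R -> R) abO gam abT c Y0m N kind dbar l :
  (forall y1 y2, y1 <= y2 -> F y1 <= F y2 /\ F y2 - F y1 <= y2 - y1) ->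
  0 < abO -> 0 < gam -> 0 < abT ->
  (forall k, (k < N)%nat -> kind k = FixedDay -> 0 <= dbar k) ->
  fixed_BED_sum N kind dbar abO gam <= c ->
  (l < N)%nat -> kind l = FreeDay ->
  (forall k, (k < N)%nat -> kind k = FreeDay -> (k <= l)%nat) ->
  abO >= gam * abT ->
  exists d, optimal N kind dbar abO gam c F abT Y0m d /\
       (forall k, (k < N)%nat -> kind k = FreeDay -> k <> l -> d k = 0) /\
       (fixed_BED_sum N kind dbar abO gam < c -> 0 < d l).
Proof.
  intros HF Ha Hg Ht Hdb Hfs Hl Hkl Hlast Hat.
  set (cp := c - fixed_BED_sum N kind dbar abO gam).
  destruct (invO_spec abO gam cp Ha Hg ltac:(unfold cp; lra)) as [z0 [zO zpos]].
  set (z := invO abO gam cp) in *.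
  set (ds := dstar kind dbar l z).
  assert (dsl : ds l = z) by (unfold ds, dstar; rewrite Hkl, Nat.eqb_refl; auto).
  assert (dsfree : forall k, kind k = FreeDay -> k <> l -> ds k = 0).
  { intros k Hk Hkl'. unfold ds, dstar. rewrite Hk. apply Nat.eqb_neq in Hkl'. rewrite Hkl'. auto. }
  assert (dsnf : forall k, kind k <> FreeDay -> (k < N)%nat -> forall d', feasible N kind dbar abO gam c d' ->
     BED_T abT (d' k) = BED_T abT (ds k)).
  { intros k Hk HkN d' [_ [HB [HFx _]]]. unfold ds, dstar. destruct (kind k) eqn:E.
    - rewrite (HB k HkN E). auto.
    - rewrite (HFx k HkN E). auto.
    - contradiction. }
  assert (Hfeas : feasible N kind dbar abO gam c ds).
  { split; [|split; [|split]].
    - intros k Hk. unfold ds, dstar. destruct (kind k) eqn:E; try lra; auto.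
      destruct (Nat.eqb k l); lra.
    - intros k Hk E. unfold ds, dstar. rewrite E; auto.
    - intros k Hk E. unfold ds, dstar. rewrite E; auto.
    - rewrite (O_split N kind dbar abO gam ds).
      + rewrite (sumN_one _ N l).
        * rewrite (proj2 (Nat.ltb_lt l N)) by auto. unfold fr. rewrite Hkl, dsl, zO. unfold cp. lra.
        * intros k Hk. unfold fr. destruct (kind k) eqn:E; auto. rewrite dsfree by auto. apply BED_O_0.
      + intros k Hk E. unfold ds, dstar. rewrite E; auto.
      + intros k Hk E. unfold ds, dstar. rewrite E; auto. }
  exists ds. split; [split; [exact Hfeas|] | split].
  - intros d' Hd'.
    pose proof (free_T_bound N kind dbar abO gam c abT d' z Ha Hg Ht Hat z0 Hd' ltac:(rewrite zO; unfold cp; lra)) as Tot.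
    destruct Hd' as [Hn [HB [HFx Hs]]] eqn:Hd'E.
    set (Sf := fun m => sumN (fun k => fr kind k (BED_T abT (d' k))) m).
    assert (frn : forall k, (k < N)%nat -> 0 <= fr kind k (BED_T abT (d' k))).
    { intros k Hk. unfold fr. destruct (kind k); try lra. apply (BED_T_mono abT 0 (d' k)) in Ht; [rewrite BED_T_0 in Ht; exact Ht|]. split; [lra| apply Hn; auto]. }
    assert (SfN : forall m, (m <= N)%nat -> 0 <= Sf m /\ Sf m <= BED_T abT z).
    { intros m Hm. split.
      - apply sumN_nonneg. intros; apply frn; lia.
      - apply Rle_trans with (Sf N); auto. apply sumN_mono_n; auto. }
    set (s := fun n => if Nat.ltb n l then Sf (S n) else 0).
    assert (Hdom := domination F abT Y0m ds d' s (N - 1) HF).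
    assert (sl : forall n, (l <= n)%nat -> s n = 0).
    { intros n Hn2. unfold s. rewrite (proj2 (Nat.ltb_ge n l)) by exact Hn2. auto. }
    assert (s0 : s (N - 1)%nat = 0) by (apply sl; lia).
    assert (Yds : Yplus F abT Y0m ds (N - 1) <= Yplus F abT Y0m d' (N - 1) + s (N - 1)%nat).
    { apply Hdom; [| | | lia].
      - intros n. unfold s. destruct (Nat.ltb n l) eqn:E; [|lra].
        apply Nat.ltb_lt in E. apply SfN. lia.
      - unfold s. destruct (Nat.ltb 0 l) eqn:E.
        + apply Nat.ltb_lt in E. unfold Sf. simpl.
          destruct (kind 0%nat) eqn:K0.
          * rewrite <- (dsnf 0%nat) with (d' := d') by (auto; congruence || lia). unfold fr; rewrite K0. lra.
          * rewrite <- (dsnf 0%nat) with (d' := d') by (auto; congruence || lia). unfold fr; rewrite K0. lra.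
          * rewrite dsfree by (auto; lia). rewrite BED_T_0. unfold fr; rewrite K0. lra.
        + apply Nat.ltb_ge in E. assert (l = 0%nat) by lia. subst l.
          rewrite dsl.
          assert (BED_T abT (d' 0%nat) <= Sf N).
          { pose proof (sumN_le_term _ N 0%nat frn ltac:(lia)) as T0. unfold fr in T0. rewrite Hkl in T0. exact T0. }
          pose proof (SfN N (le_n N)). lra.
      - intros n Hn1. unfold s.
        destruct (Nat.ltb (S n) l) eqn:E1.
        + apply Nat.ltb_lt in E1. rewrite (proj2 (Nat.ltb_lt n l)) by lia.
          change (Sf (S (S n))) with (Sf (S n) + fr kind (S n) (BED_T abT (d' (S n)))).
          destruct (kind (S n)) eqn:K.
          * rewrite <- (dsnf (S n)) with (d' := d') by (auto; congruence || lia). unfold fr; rewrite K. lra.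
          * rewrite <- (dsnf (S n)) with (d' := d') by (auto; congruence || lia). unfold fr; rewrite K. lra.
          * rewrite dsfree by (auto; lia). rewrite BED_T_0. unfold fr; rewrite K. lra.
        + apply Nat.ltb_ge in E1.
          destruct (Nat.eq_dec (S n) l) as [Heq|Hne].
          * rewrite (proj2 (Nat.ltb_lt n l)) by lia. rewrite <- Heq in *. rewrite dsl.
            assert (Sf (S (S n)) <= BED_T abT z) by (apply SfN; lia).
            change (Sf (S (S n))) with (Sf (S n) + fr kind (S n) (BED_T abT (d' (S n)))) in H.
            unfold fr in H at 1. rewrite Hkl in H. lra.
          * rewrite (proj2 (Nat.ltb_ge n l)) by lia.
            assert (kind (S n) <> FreeDay) by (intro K; specialize (Hlast (S n) ltac:(lia) K); lia).
            rewrite (dsnf (S n)) with (d' := d') by (auto; lia). lra. }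
    lra.
  - intros k Hk Hf Hne. apply dsfree; auto.
  - intros Hlt. rewrite dsl. apply zpos. unfold cp; lra.
Qed.


Definition swap (d : nat -> R) i j k := if Nat.eqb k i then d j else if Nat.eqb k j then d i else d k.

Lemma swap_i d i j : swap d i j i = d j.
Proof. unfold swap. rewrite Nat.eqb_refl. auto. Qed.
Lemma swap_j d i j : i <> j -> swap d i j j = d i.
Proof. intros H. unfold swap. rewrite (proj2 (Nat.eqb_neq j i)) by auto. rewrite Nat.eqb_refl. auto. Qed.
Lemma swap_o d i j k : k <> i -> k <> j -> swap d i j k = d k.
Proof. intros H1 H2. unfold swap. rewrite (proj2 (Nat.eqb_neq k i)), (proj2 (Nat.eqb_neq k j)) by auto. auto. Qed.

Lemma swap_sum (g : R -> R) d N i j : i <> j -> (i < N)%nat -> (j < N)%nat ->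
  sumN (fun k => g (swap d i j k)) N = sumN (fun k => g (d k)) N.
Proof.
  intros Hij Hi Hj.
  assert (sumN (fun k => g (swap d i j k) - g (d k)) N = 0).
  { rewrite (sumN_two _ N i j Hij Hi Hj).
    - rewrite swap_i, swap_j by auto. ring.
    - intros k H1 H2. rewrite swap_o by auto. ring. }
  rewrite sumN_minus in H. lra.
Qed.

Lemma swap_feasible N kind dbar abO gam c d i j : i <> j -> (i < N)%nat -> (j < N)%nat ->
  kind i = FreeDay -> kind j = FreeDay ->
  feasible N kind dbar abO gam c d -> feasible N kind dbar abO gam c (swap d i j).
Proof.
  intros Hij Hi Hj Ki Kj [Hn [HB [HFx Hs]]].
  assert (G : forall k, (k < N)%nat -> kind k <> FreeDay -> swap d i j k = d k).
  { intros k Hk K. apply swap_o; intro; subst; congruence. }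
  split; [|split; [|split]].
  - intros k Hk. unfold swap. destruct (Nat.eqb k i); [|destruct (Nat.eqb k j)]; apply Hn; auto.
  - intros k Hk E. rewrite G by (auto; congruence). auto.
  - intros k Hk E. rewrite G by (auto; congruence). auto.
  - rewrite (swap_sum (BED_O abO gam)) by auto. auto.
Qed.

Lemma swap_better (F : R -> R) abT Y0m N kind dbar abO gam c d i j :
  (forall y1 y2, y1 <= y2 -> F y1 <= F y2 /\ F y2 - F y1 <= y2 - y1) ->
  0 < abT -> (i < j)%nat -> (j < N)%nat -> d j <= d i ->
  feasible N kind dbar abO gam c d ->
  Yplus F abT Y0m (swap d i j) (N - 1) <= Yplus F abT Y0m d (N - 1).
Proof.
  intros HF Ht Hij Hj Hd [Hn _].
  set (del := BED_T abT (d i) - BED_T abT (d j)).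
  assert (del0 : 0 <= del).
  { unfold del. assert (BED_T abT (d j) <= BED_T abT (d i)) by (apply BED_T_mono; [auto| split; [apply Hn; lia| auto]]). lra. }
  set (s := fun n => if andb (Nat.leb i n) (Nat.ltb n j) then del else 0).
  assert (H := domination F abT Y0m (swap d i j) d s (N - 1) HF).
  assert (sN : s (N - 1)%nat = 0).
  { unfold s. rewrite (proj2 (Nat.ltb_ge (N - 1) j)) by lia. rewrite Bool.andb_false_r. auto. }
  assert (Hij' : i <> j) by lia.
  enough (Yplus F abT Y0m (swap d i j) (N - 1) <= Yplus F abT Y0m d (N - 1) + s (N - 1)%nat) by lra.
  apply H; [| | |lia].
  - intros n. unfold s. destruct (andb (Nat.leb i n) (Nat.ltb n j)); lra.
  - unfold s. destruct (Nat.eq_dec i 0) as [->|Hi0].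
    + rewrite swap_i. simpl. rewrite (proj2 (Nat.ltb_lt 0 j)) by lia. unfold del. lra.
    + rewrite swap_o by lia. rewrite (proj2 (Nat.leb_gt i 0)) by lia. simpl. lra.
  - intros n Hn1. unfold s.
    destruct (Nat.eq_dec (S n) i) as [E|E]; [|destruct (Nat.eq_dec (S n) j) as [E'|E']].
    + rewrite E, swap_i. rewrite (proj2 (Nat.leb_le i i)), (proj2 (Nat.ltb_lt i j)) by lia.
      rewrite (proj2 (Nat.leb_gt i n)) by lia. simpl. unfold del. lra.
    + rewrite E', swap_j by auto. rewrite (proj2 (Nat.ltb_ge j j)) by lia.
      rewrite (proj2 (Nat.ltb_lt n j)) by lia.
      rewrite (proj2 (Nat.leb_le i n)) by lia. rewrite Bool.andb_false_r. simpl. unfold del. lra.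
    + rewrite swap_o by auto.
      destruct (Nat.leb_spec i (S n)); destruct (Nat.ltb_spec (S n) j);
      destruct (Nat.leb_spec i n); destruct (Nat.ltb_spec n j); simpl; try lia; lra.
Qed.

Module Topo.
From HB Require Import structures.
From mathcomp Require Import all_boot all_order all_algebra.
From mathcomp Require Import all_classical all_reals all_analysis.
From mathcomp Require Import Rstruct Rstruct_topology.
Import Order.TTheory GRing.Theory Num.Theory.
Import numFieldNormedType.Exports.
Local Open Scope classical_set_scope.

Definition T := {ptws nat -> R}.

Definition ctsT (g : T -> R) := continuous g.

Lemma cts_proj k : ctsT (fun d => d k).
Proof. exact: (@proj_continuous nat (fun _ => R) k). Qed.

Lemma cts_cst a : ctsT (fun _ => a).
Proof. exact: cst_continuous. Qed.

Lemma cts_add f g : ctsT f -> ctsT g -> ctsT (fun d => Rplus (f d) (g d)).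
Proof. move=> hf hg d. have H1 : f @ d --> f d := hf d. have H2 : g @ d --> g d := hg d. exact (@cvgD R R^o _ _ _ f g _ _ H1 H2). Qed.

Lemma cts_mul f g : ctsT f -> ctsT g -> ctsT (fun d => Rmult (f d) (g d)).
Proof. move=> hf hg d. have H1 : f @ d --> f d := hf d. have H2 : g @ d --> g d := hg d. exact (cvgM H1 H2). Qed.

Lemma cts_opp f : ctsT f -> ctsT (fun d => Ropp (f d)).
Proof. move=> hf d. have H1 : f @ d --> f d := hf d. exact (@cvgN R R^o _ _ _ f _ H1). Qed.

Lemma cts_comp (h : R -> R) f : (forall x, continuity_pt h x) -> ctsT f -> ctsT (fun d => h (f d)).
Proof.
move=> hh hf d. apply: continuous_comp; first exact: hf.
exact/continuity_pt_cvg.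
Qed.


Lemma exists_min (lo hi : nat -> R) (h G W : T -> R) c :
  (forall k, Rle (lo k) (hi k)) -> ctsT h -> ctsT G -> ctsT W ->
  (exists d0 : T, (forall k, Rle (lo k) (d0 k) /\ Rle (d0 k) (hi k)) /\ Rle (h d0) c) ->
  exists d : T, ((forall k, Rle (lo k) (d k) /\ Rle (d k) (hi k)) /\ Rle (h d) c) /\
    (forall d' : T, (forall k, Rle (lo k) (d' k) /\ Rle (d' k) (hi k)) /\ Rle (h d') c -> Rle (G d) (G d')) /\
    (forall d' : T, (forall k, Rle (lo k) (d' k) /\ Rle (d' k) (hi k)) /\ Rle (h d') c ->
        Rle (G d') (G d) -> Rle (W d') (W d)).
Proof.
move=> Hlh ch cG cW [d0 Hd0].
pose S0 := [set d : T | forall k, `[lo k, hi k]%classic (d k)].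
have cS0 : compact S0.
  by apply: (@tychonoff nat (fun _ => R) (fun k => `[lo k, hi k]%classic)) => k; exact: segment_compact.
pose K1 := S0 `&` (h @^-1` [set x | x <= c]%R).
have cK1 : compact K1.
  apply: compact_closedI => //; apply: preimage_closed; last exact: closed_le.
  by move=> x _; exact: ch.
have memK1 (d : T) : K1 d <-> ((forall k, Rle (lo k) (d k) /\ Rle (d k) (hi k)) /\ Rle (h d) c).
  rewrite /K1 /S0 /=; split.
    move=> [H1 /RleP H2]; split => // k; have := H1 k; rewrite /= in_itv /= => /andP [/RleP a /RleP b]; by [].
  move=> [H1 H2]; split; last exact/RleP.
  move=> k; have [a b] := H1 k; rewrite /= in_itv /=; apply/andP; split; exact/RleP.
have K1ne : K1 !=set0 by exists d0; apply/memK1.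
have cGK : {within K1, continuous G} by apply: continuous_subspaceT; exact: cG.
have [d1 d1K1 d1min] := compact_EVT_min K1ne cK1 cGK.
pose K2 := K1 `&` (G @^-1` [set x | x <= G d1]%R).
have cK2 : compact K2.
  apply: compact_closedI => //; apply: preimage_closed; last exact: closed_le.
  by move=> x _; exact: cG.
have K2ne : K2 !=set0 by exists d1; split; [exact: set_mem | rewrite /=].
have cWK : {within K2, continuous W} by apply: continuous_subspaceT; exact: cW.
have [d2 d2K2 d2max] := compact_EVT_max K2ne cK2 cWK.
have [d2K1 d2G] := set_mem d2K2.
exists d2; split; first exact/memK1.
split.
  move=> d' /memK1 d'K1; apply/RleP.
  apply: le_trans d2G _; exact: d1min (mem_set d'K1).
move=> d' /memK1 d'K1 /RleP d'G; apply/RleP; apply: d2max; apply: mem_set; split => //.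
by apply: le_trans d'G d2G.
Qed.

Lemma cts_sumN (g : T -> nat -> R) N : (forall k, ctsT (fun d => g d k)) -> ctsT (fun d => sumN (g d) N).
Proof.
move=> Hg; elim: N => [|n IH] /=; first exact: (cts_cst 0).
exact (cts_add _ _ IH (Hg n)).
Qed.

Lemma cts_Yplus (F : R -> R) abT Y0m n : (forall x, continuity_pt F x) ->
  (forall x, continuity_pt (BED_T abT) x) ->
  ctsT (fun d => Yplus F abT Y0m d n).
Proof.
move=> HF HB; elim: n => [|n IH] /=.
  exact (cts_add _ _ (cts_cst Y0m) (cts_opp _ (cts_comp _ _ HB (cts_proj 0)))).
exact (cts_add _ _ (cts_comp _ _ HF IH) (cts_opp _ (cts_comp _ _ HB (cts_proj n.+1)))).
Qed.

End Topo.

Lemma BED_O_cont abO gam x : 0 < abO -> continuity_pt (BED_O abO gam) x.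
Proof. intros H. unfold BED_O. reg. Qed.

Lemma BED_T_cont abT x : 0 < abT -> continuity_pt (BED_T abT) x.
Proof. intros H. unfold BED_T. reg. Qed.

Lemma F_cont (F : R -> R) :
  (forall y1 y2, y1 <= y2 -> F y1 <= F y2 /\ F y2 - F y1 <= y2 - y1) ->
  forall x, continuity_pt F x.
Proof.
  intros HF x. unfold continuity_pt, continue_in, limit1_in, limit_in.
  intros eps Heps. exists eps. split; auto.
  intros y [_ Hy]. simpl in *. unfold R_dist in *.
  destruct (Rle_dec x y) as [h|h].
  - destruct (HF x y h). rewrite Rabs_right by lra. rewrite Rabs_right in Hy by lra. lra.
  - destruct (HF y x ltac:(lra)). rewrite Rabs_left1 by lra. rewrite Rabs_left1 in Hy by lra. lra.
Qed.

Definition lo_b (N : nat) (kind : nat -> day_kind) (dbar : nat -> R) (k : nat) : R :=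
  if Nat.ltb k N then match kind k with FixedDay => dbar k | _ => 0 end else 0.
Definition hi_b (N : nat) (kind : nat -> day_kind) (dbar : nat -> R) (M : R) (k : nat) : R :=
  if Nat.ltb k N then match kind k with FixedDay => dbar k | FreeDay => M | BreakDay => 0 end else 0.

Lemma case2 (F : R -> R) abO gam abT c Y0m N kind dbar :
  (forall y1 y2, y1 <= y2 -> F y1 <= F y2 /\ F y2 - F y1 <= y2 - y1) ->
  0 < abO -> 0 < gam -> 0 < abT -> 0 < c -> (1 <= N)%nat ->
  (forall k, (k < N)%nat -> kind k = FixedDay -> 0 <= dbar k) ->
  fixed_BED_sum N kind dbar abO gam <= c ->
  exists d, optimal N kind dbar abO gam c F abT Y0m d /\
       (forall i j, (i < N)%nat -> (j < N)%nat -> kind i = FreeDay -> kind j = FreeDay ->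
          (i <= j)%nat -> d i <= d j).
Proof.
  intros HF Ha Hg Ht Hc HN Hdb Hfs.
  set (M := c / gam).
  set (lo := lo_b N kind dbar). set (hi := hi_b N kind dbar M).
  set (h := fun d : nat -> R => sumN (fun k => BED_O abO gam (d k)) N).
  set (G := fun d : nat -> R => Yplus F abT Y0m d (N - 1)).
  set (W := fun d : nat -> R => sumN (fun k => INR k * d k) N).
  assert (HM : 0 <= M) by (apply div_nonneg; lra).
  assert (box_feas : forall d, (forall k, lo k <= d k <= hi k) /\ h d <= c -> feasible N kind dbar abO gam c d).
  { intros d [Hb Hh]. split; [|split; [|split]]; auto.
    - intros k Hk. specialize (Hb k). unfold lo, lo_b in Hb. rewrite (proj2 (Nat.ltb_lt k N) Hk) in Hb.
      destruct (kind k) eqn:E; try lra. pose proof (Hdb k Hk E). lra.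
    - intros k Hk E. specialize (Hb k). unfold lo, hi, lo_b, hi_b in Hb. rewrite (proj2 (Nat.ltb_lt k N) Hk), E in Hb. lra.
    - intros k Hk E. specialize (Hb k). unfold lo, hi, lo_b, hi_b in Hb. rewrite (proj2 (Nat.ltb_lt k N) Hk), E in Hb. lra. }
  set (tr := fun (d : nat -> R) k => if Nat.ltb k N then d k else 0).
  assert (feas_box : forall d, feasible N kind dbar abO gam c d ->
     ((forall k, lo k <= tr d k <= hi k) /\ h (tr d) <= c) /\ G (tr d) = G d).
  { intros d Hd. pose proof Hd as [Hn [HB [HFx Hs]]].
    assert (hE : h (tr d) = h d).
    { unfold h. apply sumN_ext. intros k Hk. unfold tr. rewrite (proj2 (Nat.ltb_lt k N) Hk). auto. }
    split; [split|].
    - intros k. unfold lo, hi, lo_b, hi_b, tr. destruct (Nat.ltb k N) eqn:E; [|lra].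
      apply Nat.ltb_lt in E. destruct (kind k) eqn:K.
      + rewrite (HB k E K). lra.
      + rewrite (HFx k E K). lra.
      + split; [apply Hn; auto|].
        assert (BED_O abO gam (d k) <= c).
        { apply Rle_trans with (h d); auto.
          apply (sumN_le_term (fun k => BED_O abO gam (d k))); auto.
          intros; apply BED_O_nonneg; auto. }
        pose proof (BED_O_ge abO gam (d k) Ha Hg (Hn k E)).
        unfold M. apply Rmult_le_reg_l with gam; auto. unfold Rdiv.
        replace (gam * (c * / gam)) with c by (field; lra). lra.
    - rewrite hE. auto.
    - unfold G. apply Yplus_ext. intros k Hk. unfold tr. rewrite (proj2 (Nat.ltb_lt k N)) by lia. auto. }
  assert (d0feas : feasible N kind dbar abO gam c (fun k => match kind k with FixedDay => dbar k | _ => 0 end)).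
  { split; [|split; [|split]].
    - intros k Hk. destruct (kind k) eqn:E; try lra. apply Hdb; auto.
    - intros k Hk E. rewrite E. auto.
    - intros k Hk E. rewrite E. auto.
    - rewrite (O_split N kind dbar).
      + rewrite sumN_zero. lra. intros k Hk. unfold fr. destruct (kind k); auto. apply BED_O_0.
      + intros k Hk E. rewrite E. auto.
      + intros k Hk E. rewrite E. auto. }
  destruct (Topo.exists_min lo hi h G W c) as [d [Hd [Hmin Hmax]]].
  - intros k. unfold lo, hi, lo_b, hi_b. destruct (Nat.ltb k N); [destruct (kind k)|]; lra.
  - apply Topo.cts_sumN. intros k. apply (Topo.cts_comp (BED_O abO gam) (fun d => d k)).
    + intros x; apply BED_O_cont; auto.
    + apply Topo.cts_proj.
  - apply Topo.cts_Yplus; [apply F_cont; auto| intros x; apply BED_T_cont; auto].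
  - apply Topo.cts_sumN. intros k. apply (Topo.cts_mul (fun _ => INR k) (fun d => d k)).
    + apply Topo.cts_cst.
    + apply Topo.cts_proj.
  - exists (tr (fun k => match kind k with FixedDay => dbar k | _ => 0 end)). apply feas_box; auto.
  - assert (Hdf : feasible N kind dbar abO gam c d) by (apply box_feas; auto).
    exists d. split; [split; auto|].
    + intros d' Hd'. destruct (feas_box d' Hd') as [Hb HGe]. fold (G d'). rewrite <- HGe. apply Hmin; auto.
    + intros i j Hi Hj Ki Kj Hij.
      destruct (Rle_or_lt (d i) (d j)) as [ok|bad]; [exact ok|exfalso].
      destruct (Nat.eq_dec i j) as [->|Hne]; [lra|].
      assert (Hlt : (i < j)%nat) by lia.
      set (ds := swap d i j).
      assert (Hsw : feasible N kind dbar abO gam c ds) by (apply swap_feasible; auto).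
      assert (Gs : G ds <= G d) by (apply swap_better with kind dbar abO gam c; auto; lra).
      assert (bs : (forall k, lo k <= ds k <= hi k) /\ h ds <= c).
      { split.
        - intros k. destruct Hd as [Hb _]. unfold ds, swap.
          destruct (Nat.eqb k i) eqn:E1; [|destruct (Nat.eqb k j) eqn:E2]; auto.
          + apply Nat.eqb_eq in E1; subst k. specialize (Hb j).
            unfold lo, hi, lo_b, hi_b in *. rewrite (proj2 (Nat.ltb_lt i N) Hi), Ki.
            rewrite (proj2 (Nat.ltb_lt j N) Hj), Kj in Hb. auto.
          + apply Nat.eqb_eq in E2; subst k. specialize (Hb i).
            unfold lo, hi, lo_b, hi_b in *. rewrite (proj2 (Nat.ltb_lt j N) Hj), Kj.
            rewrite (proj2 (Nat.ltb_lt i N) Hi), Ki in Hb. auto.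
        - unfold h, ds. rewrite (swap_sum (BED_O abO gam)) by auto. apply Hd. }
      pose proof (Hmax ds bs Gs) as Wle.
      assert (Wd : W ds - W d = (INR j - INR i) * (d i - d j)).
      { unfold W. rewrite <- sumN_minus. rewrite (sumN_two _ N i j Hne Hi Hj).
        - unfold ds. rewrite swap_i, swap_j by auto. ring.
        - intros k H1 H2. unfold ds. rewrite swap_o by auto. ring. }
      assert (INR i < INR j) by (apply lt_INR; auto).
      assert (0 < (INR j - INR i) * (d i - d j)) by (apply Rmult_lt_0_compat; lra).
      lra.
Qed.


Theorem corollary1
  (alphaT betaT abO gam c X0 : R) (phi F : R -> R)
  (N : nat) (kind : nat -> day_kind) (dbar : nat -> R) (l : nat) :
  0 < alphaT -> 0 < betaT -> 0 < abO -> 0 < gam < 1 -> 0 < c -> 0 < X0 ->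
  (forall x, 0 < x -> continuous phi x) ->
  (forall x y, 0 < x -> x <= y -> phi y <= phi x) ->
  (forall x, 0 < x -> 0 < phi x) ->
  one_day_growth_map alphaT phi F ->
  (1 <= N)%nat ->
  (forall k, (k < N)%nat -> kind k = FixedDay -> 0 <= dbar k) ->
  fixed_BED_sum N kind dbar abO gam <= c ->
  (* l is the last free day (so there is at least one free day) *)
  (l < N)%nat -> kind l = FreeDay ->
  (forall k, (k < N)%nat -> kind k = FreeDay -> (k <= l)%nat) ->
  (abO >= gam * (alphaT / betaT) ->
     exists d, optimal N kind dbar abO gam c F (alphaT / betaT) (ln X0 / alphaT) d /\
       (forall k, (k < N)%nat -> kind k = FreeDay -> k <> l -> d k = 0) /\
       (fixed_BED_sum N kind dbar abO gam < c ->
          0 < d l)) /\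
  (abO < gam * (alphaT / betaT) ->
     exists d, optimal N kind dbar abO gam c F (alphaT / betaT) (ln X0 / alphaT) d /\
       (forall i j, (i < N)%nat -> (j < N)%nat -> kind i = FreeDay -> kind j = FreeDay ->
          (i <= j)%nat -> d i <= d j)).
Proof.
  intros Ha Hb HaO Hg Hc HX Hcont Hphi Hpos HF HN Hdb Hfs Hl Hkl Hlast.
  assert (HFp := F_props alphaT phi F Ha Hphi HF).
  assert (HT : 0 < alphaT / betaT) by (unfold Rdiv; apply Rmult_lt_0_compat; [lra| apply Rinv_0_lt_compat; lra]).
  split; intros Hcase.
  - apply case1; auto; lra.
  - apply case2; auto; lra.
Qed.
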